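(* Let $A$ be a $J_p$-set in $(\mathbb{N},+)$ and let $B\subseteq\mathbb{N}$ be finite. Then $A\setminus B$ is a $J_p$-set in $(\mathbb{N},+)$.
   Context: $\mathbb{N}=\{1,2,\dots\}$. $\mathbb{P}$ denotes the set of polynomials with coefficients in $\mathbb{N}\cup\{0\}$ and zero constant term which map $\mathbb{N}$ into $\mathbb{N}$. $\mathcal{P}_f(X)$ is the set of nonempty finite subsets of $X$, and ${}^{\mathbb{N}}\mathbb{N}$ the set of sequences in $\mathbb{N}$. For $R\in\mathcal{P}_f(\mathbb{P})$, $L\in\mathcal{P}_f({}^{\mathbb{N}}\mathbb{N})$, $a\in\mathbb{N}$, $H\in\mathcal{P}_f(\mathbb{N})$, $S_{R,L}(a,H)=\{a+f(\sum_{t\in H}g(t)): f\in R, g\in L\}$. $A\subseteq\mathbb{N}$ is a $J_p$-set if for every $R\in\mathcal{P}_f(\mathbb{P})$ and $L\in\mathcal{P}_f({}^{\mathbb{N}}\mathbb{N})$ there exist $a\in\mathbb{N}$ and $H\in\mathcal{P}_f(\mathbb{N})$ with $S_{R,L}(a,H)\subseteq A$. *)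

(* Defs.v *)
From mathcomp Require Import all_boot.
From Stdlib Require List.
Set Implicit Arguments. Unset Strict Implicit. Unset Printing Implicit Defensive.

(* Subsets of N = {1,2,...} are represented as predicates on nat; only
   their values at positive naturals matter (we always require membership
   to imply positivity where relevant). *)

Definition peval (c : seq nat) (x : nat) : nat :=
  \sum_(i < size c) nth 0 c i * x ^ i.

Definition inP (c : seq nat) : Prop :=
  nth 0 c 0 = 0 /\ (forall n, 0 < n -> 0 < peval c n).

Definition NSeq (g : nat -> nat) : Prop := forall t, 0 < t -> 0 < g t.

Definition S_sub (A : nat -> Prop) (R : seq (seq nat)) (L : seq (nat -> nat))
  (a : nat) (H : seq nat) : Prop :=
  forall f g, List.In f R -> List.In g L ->
    A (a + peval f (\sum_(t <- H) g t)).

(* J_p-set. R, L: nonempty finite lists (sets) of elements of P and of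
   sequences in N; H: a nonempty finite subset of N, represented as a
   duplicate-free nonempty list of positive naturals. *)
Definition Jp_set (A : nat -> Prop) : Prop :=
  forall (R : seq (seq nat)) (L : seq (nat -> nat)),
    R <> nil -> (forall f, List.In f R -> inP f) ->
    L <> nil -> (forall g, List.In g L -> NSeq g) ->
    exists (a : nat) (H : seq nat),
      0 < a /\ H <> [::] /\ uniq H /\ (forall t, t \in H -> 0 < t) /\
      S_sub A R L a H.

(* Main.v *)
Require Import Defs.
From mathcomp Require Import all_boot.
From Stdlib Require List.
From mathcomp Require Import zify.

Lemma peval_ge (c : seq nat) x : inP c -> 0 < x -> x <= peval c x.
Proof.
move=> [c0 pos] x0.
have h1 := pos 1 isT.
have : x * peval c 1 <= peval c x.
  rewrite /peval big_distrr /=; apply: leq_sum => i _.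
  case: i => [[|i] Hi] /=.
    by rewrite c0 !muln0.
  rewrite exp1n muln1 mulnC leq_mul2l; apply/orP; right.
  by rewrite -{1}(expn1 x) leq_pexp2l.
apply: leq_trans; by rewrite -{1}(muln1 x) leq_mul2l h1 orbT.
Qed.

Theorem theorem5p3 (A B : nat -> Prop) (Bfin : seq nat) :
  (forall n, A n -> 0 < n) ->
  (forall n, B n <-> n \in Bfin) ->
  Jp_set A ->
  Jp_set (fun n => A n /\ ~ B n).
Proof.
move=> Apos HB JA R L Rn Rp Ln Lp.
pose m := \max_(b <- Bfin) b.
have [M hM] : {M | M = m.+1} by exists m.+1.
have M0 : 0 < M by rewrite hM.
pose g' (g : nat -> nat) t := \sum_(j <- iota 0 M) g (t * M + j).
have Ln' : map g' L <> nil by case: L Ln {Lp} => //.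
have Lp' : forall g, List.In g (map g' L) -> NSeq g.
  move=> g /List.in_map_iff [g0 [<- Hg0]] t t0.
  rewrite /g' hM /= big_cons; apply: ltn_addr; apply: Lp => //.
  by rewrite addn0 muln_gt0 t0.
have [a [H [a0 [Hn [Hu [Hpos HS]]]]]] := JA R (map g' L) Rn Rp Ln' Lp'.
pose H2 := [seq p.1 * M + p.2 | p <- [seq (x, y) | x <- H, y <- iota 0 M]].
have Hsum : forall g, \sum_(t <- H2) g t = \sum_(t <- H) g' g t.
  by move=> g; rewrite big_map big_allpairs.
exists a, H2; split => //; split.
  move/(congr1 size); rewrite size_map size_allpairs size_iota.
  case: (H) Hn => //= t H' _; lia.
split.
  rewrite map_inj_in_uniq; first by rewrite allpairs_uniq // ?iota_uniq // => -[? ?] [? ?] _ _ [-> ->].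
  move=> [u v] [u' v'] H1 H2' /= E.
  have {H1} /allpairsP [[u1 v1] [/= _ Hv [_ ev]]] := H1.
  have {H2'} /allpairsP [[u2 v2] [/= _ Hv' [_ ev']]] := H2'.
  subst v1 v2.
  rewrite mem_iota in Hv; rewrite mem_iota in Hv'.
  have e1 : u = u'.
    by move: (congr1 (fun n => n %/ M) E) => /=; rewrite !divnMDl // !divn_small //; lia.
  have e2 : v = v'.
    by move: (congr1 (fun n => n %% M) E) => /=; rewrite !modnMDl !modn_small //; lia.
  by rewrite e1 e2.
split.
  move=> t /mapP [[u v] /allpairsP [[u' v'] [/= Hu' _ [-> ->]]] ->] /=.
  have := Hpos _ Hu'; nia.
move=> f g Hf Hg; split.
  rewrite Hsum.
  apply: (HS f (g' g) Hf); exact: List.in_map.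
move/HB => Hb.
have Hmax : a + peval f (\sum_(t <- H2) g t) <= m.
  exact: leq_bigmax_seq.
have Hs : M <= \sum_(t <- H2) g t.
  apply: (@leq_trans (\sum_(t <- H2) 1)).
    rewrite sum1_size size_map size_allpairs size_iota.
    case: (H) Hn => //= t H' _; lia.
  rewrite big_seq_cond [X in _ <= X]big_seq_cond; apply: leq_sum => i /andP [Hi _].
  have := Hpos; move=> _.
  move: Hi => /mapP [[u v] /allpairsP [[u' v'] [/= Hu' _ [-> ->]]] ->] /=.
  apply: Lp => //; have := Hpos _ Hu'; nia.
have := @peval_ge f _ (Rp f Hf) (leq_trans M0 Hs).
rewrite hM /m in Hs; lia.
Qed.
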